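(* Consider a tabular finite MDP and a full-support policy $\pi$. Let $\pi'(a|s)=\pi(a|s)e^{\eta f_a(s)}/Z_s$ with $\eta>0$, where $f_a(s):=[U_a(s)]_+$ and $Z_s:=\sum_{a'}\pi(a'|s)e^{\eta f_{a'}(s)}$. Then \[ V(\pi')-V(\pi)=\frac{1}{1-\gamma}\sum_{s\in\mathcal S}d_\rho^{\pi'}(s)\,\frac1{Z_s}\sum_{i:\,U_i(s)>0}\pi(i|s)U_i(s)\big(e^{\eta U_i(s)}-1\big)\;\ge\;0. \]
   Context: A finite MDP $(\mathcal S,\mathcal A,P,r,\gamma,\rho)$ with $\gamma\in[0,1)$; $V^\pi,Q^\pi$ discounted value functions, $V(\pi)=\mathbb{E}_{s\sim\rho}V^\pi(s)$, $d_\rho^\pi(s)=(1-\gamma)\sum_{t\ge0}\gamma^t\Pr(s_t=s\mid\rho,\pi)$. $U_a(s):=Q^\pi(s,a)-V^\pi(s)$ (advantage under the current policy $\pi$), $[x]_+=\max(x,0)$. *)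

(* Defs.v *)
From mathcomp Require Import all_boot all_order all_algebra.
From mathcomp Require Import all_classical all_reals all_analysis.
Import Order.TTheory GRing.Theory Num.Theory.
Import numFieldNormedType.Exports.
Local Open Scope ring_scope.

Set Implicit Arguments.
Unset Strict Implicit.
Unset Printing Implicit Defensive.

Section TabularMDP.
Context {R : realType} {S A : finType}.
(* transition kernel P(s'|s,a) = P s a s', reward r(s,a), discount gamma *)
Variables (P : S -> A -> S -> R) (r : S -> A -> R) (gamma : R).

Definition policy := S -> A -> R.

(* state_prob pi t s0 s = Pr(s_t = s | s_0 = s0, pi) *)
Fixpoint state_prob (pi : policy) (t : nat) (s0 s : S) : R :=
  match t with
  | 0 => (s0 == s)%:R
  | t'.+1 => \sum_(s' : S) state_prob pi t' s0 s' * \sum_(a : A) pi s' a * P s' a s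
  end.

Definition exp_reward (pi : policy) (t : nat) (s0 : S) : R :=
  \sum_(s : S) state_prob pi t s0 s * \sum_(a : A) pi s a * r s a.

(* V^pi(s) = E[ sum_t gamma^t r(s_t,a_t) | s_0 = s ]  (real series, as the limit
   of partial sums; convergent since gamma < 1 and everything is finite) *)
Definition Vfun (pi : policy) (s0 : S) : R :=
  limn (series (fun t : nat => gamma ^+ t * exp_reward pi t s0)).

Definition Qfun (pi : policy) (s : S) (a : A) : R :=
  r s a + gamma * \sum_(s' : S) P s a s' * Vfun pi s'.

Definition Adv (pi : policy) (s : S) (a : A) : R := Qfun pi s a - Vfun pi s.

Definition Vrho (rho : S -> R) (pi : policy) : R := \sum_(s : S) rho s * Vfun pi s.

Definition dvisit (rho : S -> R) (pi : policy) (s : S) : R :=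
  (1 - gamma) * limn (series (fun t : nat =>
     gamma ^+ t * \sum_(s0 : S) rho s0 * state_prob pi t s0 s)).

Definition pos_part (x : R) : R := Num.max x 0.

Definition fpos (pi : policy) (s : S) (a : A) : R := pos_part (Adv pi s a).

Definition Zs (pi : policy) (eta : R) (s : S) : R :=
  \sum_(a : A) pi s a * expR (eta * fpos pi s a).

Definition pi_update (pi : policy) (eta : R) : policy :=
  fun s a => pi s a * expR (eta * fpos pi s a) / Zs pi eta s.

End TabularMDP.

(* Main.v *)
Require Import Defs.
From mathcomp Require Import all_boot all_order all_algebra.
From mathcomp Require Import all_classical all_reals all_analysis.
From mathcomp Require Import ring lra.
Import Order.TTheory GRing.Theory Num.Theory.
Import numFieldNormedType.Exports.
Local Open Scope ring_scope.

Section Helpers.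
Context {R : realType}.

Lemma geo_series_cvg (u : nat -> R) (C g : R) : 0 <= g -> g < 1 ->
  (forall t, `|u t| <= C * g ^+ t) -> cvgn (series u).
Proof.
move=> g0 g1 Hu.
have C0 : 0 <= C by have := Hu 0%N; rewrite expr0 mulr1; apply: le_trans.
apply: normed_cvg.
have -> : [normed series u] = series (fun n => `|u n|) by [].
apply: (@series_le_cvg _ _ (geometric C g)).
- by move=> n.
- by move=> n /=; rewrite mulr_ge0 // exprn_ge0.
- by move=> n /=; exact: Hu.
- by apply: is_cvg_geometric_series; rewrite ger0_norm.
Qed.

Lemma cvg_lin (I : finType) (c : I -> R) (u : I -> nat -> R) :
  (forall i, cvgn (u i)) ->
  ((fun n => \sum_(i : I) c i * u i n) @ \oo --> \sum_(i : I) c i * limn (u i))%classic.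
Proof.
move=> Hc.
have H := @cvg_big R I +%R 0 xpredT add_continuous nat eventually (index_enum I) (fun i n => c i * u i n) (fun i => c i * limn (u i)).
apply: H => i _.
by apply: cvgMl_tmp; exact: Hc.
Qed.

Lemma lim_lin (I : finType) (c : I -> R) (u : I -> nat -> R) :
  (forall i, cvgn (u i)) ->
  limn (fun n => \sum_(i : I) c i * u i n) = \sum_(i : I) c i * limn (u i).
Proof. by move=> Hc; apply: cvg_lim; first by []; exact: cvg_lin. Qed.

Lemma lim_ge0 (u : nat -> R) : cvgn (series u) -> (forall n, 0 <= u n) -> 0 <= limn (series u).
Proof.
move=> Hc Hu; apply: limr_ge => //; near=> n.
by rewrite /series /=; apply: sumr_ge0 => i _.
Unshelve. all: by end_near. Qed.

End Helpers.

Lemma sum_delta_l {R : realType} {S : finType} (a : S) (F : S -> R) :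
  \sum_(x : S) (a == x)%:R * F x = F a.
Proof.
rewrite (bigD1 a) //= eqxx mul1r (eq_bigr (fun=> 0)) ?big1_eq ?addr0 //.
by move=> x Hx; rewrite eq_sym (negbTE Hx) mul0r.
Qed.

Lemma sum_delta_r {R : realType} {S : finType} (a : S) (F : S -> R) :
  \sum_(x : S) F x * (x == a)%:R = F a.
Proof.
rewrite (bigD1 a) //= eqxx mulr1 (eq_bigr (fun=> 0)) ?big1_eq ?addr0 //.
by move=> x Hx; rewrite (negbTE Hx) mulr0.
Qed.

Lemma lin3 {R : realType} (I : finType) (p x y : I -> R) g c :
  \sum_(i : I) p i * (x i + g * y i - c) =
  \sum_(i : I) p i * x i + g * \sum_(i : I) p i * y i - (\sum_(i : I) p i) * c.
Proof.
rewrite mulr_sumr mulr_suml -big_split -sumrB /=; apply: eq_bigr => i _; ring.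
Qed.

Lemma lin3' {R : realType} (I : finType) (m a b c : I -> R) :
  \sum_(i : I) m i * (a i - b i - c i) =
  \sum_(i : I) m i * a i - \sum_(i : I) m i * b i - \sum_(i : I) m i * c i.
Proof. rewrite -!sumrB; apply: eq_bigr => i _; ring. Qed.

Section MDP.
Context {R : realType} {S A : finType}.
Variables (P : S -> A -> S -> R) (gamma : R).
Hypothesis HP0 : forall s a s', 0 <= P s a s'.
Hypothesis HP1 : forall s a, \sum_(s' : S) P s a s' = 1.
Hypothesis Hg0 : 0 <= gamma.
Hypothesis Hg1 : gamma < 1.

Definition Mk (pi : S -> A -> R) (s s' : S) : R := \sum_(a : A) pi s a * P s a s'.

Lemma MkE (q : S -> A -> R) (v : S -> R) s :
  \sum_(s' : S) Mk q s s' * v s' = \sum_(a : A) q s a * \sum_(s' : S) P s a s' * v s'.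
Proof.
rewrite /Mk; under eq_bigr do rewrite mulr_suml.
rewrite exchange_big /=; apply: eq_bigr => a _; rewrite mulr_sumr.
by apply: eq_bigr => s' _; rewrite mulrA.
Qed.

Lemma sp_S (pi : S -> A -> R) t s0 s :
  state_prob P pi t.+1 s0 s = \sum_(s' : S) state_prob P pi t s0 s' * Mk pi s' s.
Proof. by []. Qed.

Lemma sp_left (pi : S -> A -> R) t s0 s :
  state_prob P pi t.+1 s0 s = \sum_(s' : S) Mk pi s0 s' * state_prob P pi t s' s.
Proof.
elim: t s0 s => [|t IH] s0 s.
  by rewrite /= sum_delta_l sum_delta_r.
rewrite sp_S.
under eq_bigr do rewrite IH mulr_suml.
rewrite exchange_big /=; apply: eq_bigr => s' _.
by rewrite /= mulr_sumr; apply: eq_bigr => s'' _; rewrite mulrA.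
Qed.


Definition Rr (r : S -> A -> R) (pi : S -> A -> R) (s : S) : R := \sum_(a : A) pi s a * r s a.

Section Pol.
Variable pi : S -> A -> R.
Hypothesis Hpi0 : forall s a, 0 <= pi s a.
Hypothesis Hpi1 : forall s, \sum_(a : A) pi s a = 1.

Lemma Mk_ge0 s s' : 0 <= Mk pi s s'.
Proof. by apply: sumr_ge0 => a _; rewrite mulr_ge0. Qed.

Lemma Mk_sum1 s : \sum_(s' : S) Mk pi s s' = 1.
Proof.
rewrite /Mk exchange_big /= -[RHS](Hpi1 s); apply: eq_bigr => a _.
by rewrite -mulr_sumr HP1 mulr1.
Qed.

Lemma sp_ge0 t s0 s : 0 <= state_prob P pi t s0 s.
Proof.
elim: t s0 s => [|t IH] s0 s /=; first by rewrite ler0n.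
by apply: sumr_ge0 => s' _; rewrite mulr_ge0 //; apply: Mk_ge0.
Qed.

Lemma sp_sum1 t s0 : \sum_(s : S) state_prob P pi t s0 s = 1.
Proof.
elim: t s0 => [|t IH] s0.
  rewrite /= (eq_bigr (fun s => (s0 == s)%:R * 1)) ?sum_delta_l // => s _.
  by rewrite mulr1.
under eq_bigr do rewrite sp_left.
rewrite exchange_big /= -[RHS](Mk_sum1 s0); apply: eq_bigr => s' _.
by rewrite -mulr_sumr IH mulr1.
Qed.

Lemma sp_le1 t s0 s : state_prob P pi t s0 s <= 1.
Proof.
rewrite -(sp_sum1 t s0) (bigD1 s) //= lerDl; apply: sumr_ge0 => *; exact: sp_ge0.
Qed.

Variable r : S -> A -> R.

Lemma er_S t s0 : exp_reward P r pi t.+1 s0 =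
  \sum_(s' : S) Mk pi s0 s' * exp_reward P r pi t s'.
Proof.
rewrite /exp_reward; under eq_bigr do rewrite sp_left mulr_suml.
rewrite exchange_big /=; apply: eq_bigr => s' _.
by rewrite mulr_sumr; apply: eq_bigr => s _; rewrite mulrA.
Qed.

Lemma er_0 s0 : exp_reward P r pi 0 s0 = Rr r pi s0.
Proof. by rewrite /exp_reward /= sum_delta_l. Qed.

Lemma er_bound t s0 : `|exp_reward P r pi t s0| <= \sum_(s : S) `|Rr r pi s|.
Proof.
rewrite /exp_reward; apply: le_trans (ler_norm_sum _ _ _) _.
apply: le_trans (_ : \sum_(s : S) state_prob P pi t s0 s * \sum_(s : S) `|Rr r pi s| <= _).
  apply: ler_sum => s _; rewrite normrM ger0_norm ?sp_ge0 //.
  apply: ler_wpM2l; first exact: sp_ge0.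
  rewrite (bigD1 s) //= lerDl; apply: sumr_ge0 => *; exact: normr_ge0.
by rewrite -mulr_suml sp_sum1 mul1r.
Qed.

Lemma V_cvg s0 : cvgn (series (fun t => gamma ^+ t * exp_reward P r pi t s0)).
Proof.
apply: (@geo_series_cvg _ _ (\sum_(s : S) `|Rr r pi s|) gamma) => // t.
rewrite normrM ger0_norm ?exprn_ge0 // mulrC; apply: ler_wpM2r; first exact: exprn_ge0.
exact: er_bound.
Qed.

Lemma bellman s0 : Vfun P r gamma pi s0 =
  Rr r pi s0 + gamma * \sum_(s' : S) Mk pi s0 s' * Vfun P r gamma pi s'.
Proof.
rewrite /Vfun; apply: cvg_lim => //.
rewrite -cvg_shiftS.
have E : forall n, series (fun t => gamma ^+ t * exp_reward P r pi t s0) n.+1 =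
   Rr r pi s0 + \sum_(s' : S) (gamma * Mk pi s0 s') *
      series (fun t => gamma ^+ t * exp_reward P r pi t s') n.
  move=> n; rewrite /series /= big_nat_recl // expr0 mul1r.
  rewrite er_0; congr (_ + _).
  under eq_bigr do rewrite er_S mulr_sumr.
  rewrite exchange_big /=; apply: eq_bigr => s' _.
  rewrite mulr_sumr; apply: eq_bigr => k _; rewrite exprS; ring.
rewrite (_ : (fun n => _) = (fun n => Rr r pi s0 + \sum_(s' : S) (gamma * Mk pi s0 s') *
      series (fun t => gamma ^+ t * exp_reward P r pi t s') n)); last first.
  by apply: funext => n; exact: E.
rewrite mulr_sumr; under eq_bigr do rewrite mulrA.
apply: cvgD; first exact: cvg_cst.
apply: cvg_lin => s'; exact: V_cvg.
Qed.

End Pol.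

Lemma bellman_uniq (pi : S -> A -> R) (Hpi0 : forall s a, 0 <= pi s a)
  (Hpi1 : forall s, \sum_(a : A) pi s a = 1) (x : S -> R) :
  (forall s, x s = gamma * \sum_(s' : S) Mk pi s s' * x s') -> forall s, x s = 0.
Proof.
move=> Hx s.
case: (@arg_maxP _ _ S s xpredT (fun s => `|x s|) isT) => m _ Hm.
have H1 : `|x m| <= gamma * `|x m|.
  rewrite {1}Hx normrM ger0_norm //; apply: ler_wpM2l => //.
  apply: le_trans (ler_norm_sum _ _ _) _.
  rewrite -[X in _ <= X]mul1r -(@Mk_sum1 pi Hpi1 m) mulr_suml; apply: ler_sum => s' _.
  have M0 := @Mk_ge0 pi Hpi0 m s'.
  by rewrite normrM (ger0_norm M0); apply: ler_wpM2l => //; exact: Hm.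
have H2 : `|x m| <= 0.
  have H3 : (1 - gamma) * `|x m| <= 0 by rewrite mulrBl mul1r subr_le0.
  by rewrite pmulr_rle0 ?subr_gt0 in H3.
apply/eqP; rewrite -normr_le0; apply: le_trans H2; exact: Hm.
Qed.

End MDP.

Theorem lemma7 (R : realType) (S A : finType)
  (P : S -> A -> S -> R) (r : S -> A -> R) (gamma : R) (rho : S -> R)
  (pi : S -> A -> R) (eta : R)
  (HP0 : forall s a s', 0 <= P s a s')
  (HP1 : forall s a, \sum_(s' : S) P s a s' = 1)
  (Hg0 : 0 <= gamma) (Hg1 : gamma < 1)
  (Hrho0 : forall s, 0 <= rho s) (Hrho1 : \sum_(s : S) rho s = 1)
  (Hpi0 : forall s a, 0 < pi s a) (Hpi1 : forall s, \sum_(a : A) pi s a = 1)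
  (Heta : 0 < eta) :
  let pi' := pi_update P r gamma pi eta in
  let U := Adv P r gamma pi in
  Vrho P r gamma rho pi' - Vrho P r gamma rho pi =
    (1 - gamma)^-1 * \sum_(s : S) dvisit P gamma rho pi' s *
      ((Zs P r gamma pi eta s)^-1 *
       \sum_(i : A | 0 < U s i) pi s i * U s i * (expR (eta * U s i) - 1))
  /\ 0 <= Vrho P r gamma rho pi' - Vrho P r gamma rho pi.
Proof.
move=> pi' U.
have Hpi0' : forall s a, 0 <= pi s a by move=> s a; exact: ltW.
have f0 : forall s a, 0 <= fpos P r gamma pi s a.
  by move=> s a; rewrite /fpos /pos_part le_max lexx orbT.
have Z1 : forall s, 1 <= Zs P r gamma pi eta s.
  move=> s; rewrite /Zs -{1}(Hpi1 s); apply: ler_sum => a _.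
  rewrite -{1}[pi s a]mulr1; apply: ler_wpM2l => //.
  by apply: le_trans (expR_ge1Dx _); rewrite lerDl mulr_ge0 // ltW.
have Zg0 : forall s, 0 < Zs P r gamma pi eta s.
  by move=> s; exact: lt_le_trans ltr01 (Z1 s).
have p0 : forall s a, 0 <= pi' s a.
  move=> s a; rewrite /pi' /pi_update divr_ge0 ?mulr_ge0 ?expR_ge0 //.
  exact: ltW.
have p1 : forall s, \sum_(a : A) pi' s a = 1.
  move=> s; rewrite /pi' /pi_update -mulr_suml -/(Zs P r gamma pi eta s) divff //.
  by rewrite gt_eqF.
have key : forall s, Rr U pi' s = Rr r pi' s +
    gamma * \sum_(s' : S) Mk P pi' s s' * Vfun P r gamma pi s' - Vfun P r gamma pi s.
  move=> s; rewrite /Rr /U /Adv /Qfun.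
  rewrite (@lin3 R A (fun a => pi' s a) (fun a => r s a)
    (fun a => \sum_(s' : S) P s a s' * Vfun P r gamma pi s')) p1 mul1r.
  by rewrite MkE.
have Bp := bellman P gamma HP0 HP1 Hg0 Hg1 pi Hpi0' Hpi1 r.
have Bp' := bellman P gamma HP0 HP1 Hg0 Hg1 pi' p0 p1 r.
have BW := bellman P gamma HP0 HP1 Hg0 Hg1 pi' p0 p1 U.
have D : forall s, Vfun P r gamma pi' s - Vfun P r gamma pi s = Vfun P U gamma pi' s.
  move=> s.
  have X := bellman_uniq P gamma HP0 HP1 Hg0 Hg1 pi' p0 p1
    (fun s => Vfun P r gamma pi' s - Vfun P r gamma pi s - Vfun P U gamma pi' s).
  have {}X := X _ s.
  apply/eqP; rewrite -subr_eq0; apply/eqP; apply: X => s0 /=.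
  rewrite (@lin3' R S (fun s' => Mk P pi' s0 s')).
  rewrite {1}Bp' {1}BW key; ring.
have zeroU : forall s, \sum_(a : A) pi s a * U s a = 0.
  move=> s; rewrite /U /Adv /Qfun.
  rewrite (@lin3 R A (fun a => pi s a) (fun a => r s a)
    (fun a => \sum_(s' : S) P s a s' * Vfun P r gamma pi s')) Hpi1 mul1r.
  by rewrite -/(Rr r pi s) -MkE -Bp subrr.
have key2 : forall s, (Zs P r gamma pi eta s)^-1 *
    \sum_(i : A | 0 < U s i) pi s i * U s i * (expR (eta * U s i) - 1) = Rr U pi' s.
  move=> s; rewrite /Rr /pi' /pi_update.
  have -> : \sum_(a : A) pi s a * expR (eta * fpos P r gamma pi s a) / Zs P r gamma pi eta s * U s a
     = (Zs P r gamma pi eta s)^-1 * \sum_(a : A) pi s a * expR (eta * fpos P r gamma pi s a) * U s a.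
    by rewrite mulr_sumr; apply: eq_bigr => a _; ring.
  congr (_ * _).
  transitivity (\sum_(a : A) pi s a * expR (eta * fpos P r gamma pi s a) * U s a -
     \sum_(a : A) pi s a * U s a); last by rewrite zeroU subr0.
  rewrite -sumrB big_mkcond /=; apply: eq_bigr => a _.
  rewrite /fpos /pos_part -/(U s a).
  case: ifP => H.
    rewrite max_l ?ltW //. move: (U s a) (pi s a) => u p. move: (expR (eta * u)) => e. by rewrite mulrBr mulr1 mulrAC.
  rewrite max_r; last by rewrite leNgt H.
  by rewrite mulr0 expR0 mulr1 subrr.
have DScvg : forall s, cvgn (series (fun t => gamma ^+ t *
     \sum_(s0 : S) rho s0 * state_prob P pi' t s0 s)).
  move=> s; apply: (@geo_series_cvg _ _ 1 gamma) => // t.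
  rewrite normrM ger0_norm ?exprn_ge0 // mul1r -[X in _ <= X]mulr1.
  apply: ler_wpM2l; first exact: exprn_ge0.
  rewrite ger0_norm; last by apply: sumr_ge0 => s0 _; rewrite mulr_ge0 // (sp_ge0 P HP0 pi' p0).
  apply: le_trans (_ : \sum_(s0 : S) rho s0 * 1 <= _).
    apply: ler_sum => s0 _; apply: ler_wpM2l => //; exact: (sp_le1 P HP0 HP1 pi' p0 p1).
  by under eq_bigr do rewrite mulr1; rewrite Hrho1.
match goal with |- ?L = ?Rhs /\ _ => have EQ : L = Rhs end.
  have Hsum : Vrho P r gamma rho pi' - Vrho P r gamma rho pi =
      \sum_(s : S) rho s * Vfun P U gamma pi' s.
    by rewrite /Vrho -sumrB; apply: eq_bigr => s _; rewrite -mulrBr D.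
  rewrite Hsum /Vfun -lim_lin; last by move=> s; exact: (V_cvg P gamma HP0 HP1 Hg0 Hg1 pi' p0 p1).
  rewrite mulr_sumr (eq_bigr (fun s => Rr U pi' s * limn (series (fun t => gamma ^+ t *
     \sum_(s0 : S) rho s0 * state_prob P pi' t s0 s)))); last first.
    move=> s _; rewrite key2 /dvisit; field.
    by rewrite subr_eq0 eq_sym lt_eqF.
  rewrite -lim_lin //; congr (limn _); apply: funext => n.
  rewrite /series /=.
  under eq_bigr do rewrite mulr_sumr.
  rewrite exchange_big /=.
  under [RHS]eq_bigr do rewrite mulr_sumr.
  rewrite [RHS]exchange_big /=; apply: eq_bigr => t _.
  rewrite (eq_bigr (fun s => \sum_(s1 : S) rho s * gamma ^+ t * state_prob P pi' t s s1 * Rr U pi' s1)); last first.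
    move=> s _; rewrite /exp_reward mulr_sumr mulr_sumr; apply: eq_bigr => s1 _; rewrite /Rr; ring.
  rewrite [RHS](eq_bigr (fun s1 => \sum_(s0 : S) rho s0 * gamma ^+ t * state_prob P pi' t s0 s1 * Rr U pi' s1)); last first.
    move=> s1 _; rewrite mulr_sumr mulr_sumr; apply: eq_bigr => s0 _; rewrite /Rr; ring.
  by rewrite exchange_big.
split; first exact: EQ.
rewrite EQ; apply: mulr_ge0.
  by rewrite invr_ge0 subr_ge0 ltW.
apply: sumr_ge0 => s _; apply: mulr_ge0.
  rewrite /dvisit mulr_ge0 ?subr_ge0 ?(ltW Hg1) //.
  apply: lim_ge0; first exact: DScvg.
  move=> t; rewrite mulr_ge0 ?exprn_ge0 //; apply: sumr_ge0 => s0 _.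
  by rewrite mulr_ge0 // (sp_ge0 P HP0 pi' p0).
apply: mulr_ge0; first by rewrite invr_ge0 ltW.
apply: sumr_ge0 => i Hi; rewrite mulr_ge0 ?mulr_ge0 ?(ltW Hi) //.
rewrite subr_ge0; apply: le_trans (expR_ge1Dx _).
by rewrite lerDl mulr_ge0 // ltW.
Qed.
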